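(* Let $I=(I_1,\dots,I_d)\in\mathcal I_d$. If $I_j=I_k$ for some $j<k$, then $\omega_I=0$; if $I_j=\overline{I_k}$ for some $j\leq k$, then $\omega_I=0$.
   Context: $U_-$ is the universal enveloping algebra of the Lie superalgebra $L_-=L_{-2}\oplus L_{-1}$, where $L_{-2}$ has basis $\partial_1,\dots,\partial_5$ (even, central in $L_-$), $L_{-1}$ is spanned by odd elements $d_{ij}=-d_{ji}$ ($i,j\in[5]$, $d_{ii}=0$) with $[d_{ij},d_{kl}]=\varepsilon_{ijkl}\partial_{t_{ijkl}}$; if $|\{i,j,k,l\}|=4$, $t_{ijkl}$ is the fifth element of $[5]$ and $\varepsilon_{ijkl}$ the sign of the permutation $(i,j,k,l,t_{ijkl})$, otherwise $\varepsilon_{ijkl}=0$. $\mathcal I_d$ is the set of $d$-tuples of ordered pairs $I_l=(i_l,j_l)\in[5]^2$, $\overline{(i,j)}=(j,i)$, $d_I=d_{i_1j_1}\cdots d_{i_dj_d}$. For $k\neq l$ in $[d]$, $D_{\{k,l\}}(I)=\tfrac12(-1)^{k+l}\varepsilon_{i_kj_ki_lj_l}\partial_{t_{i_kj_ki_lj_l}}$. $\mathrm{SIF}_d$ is the set of sets $S$ of pairwise disjoint 2-element subsets of $[d]$; two disjoint pairs $\{k,l\},\{h,m\}$ cross if exactly one of $k,l$ is strictly between $h$ and $m$; $c(S)$ is the number of crossing pairs in $S$. $D_S(I)=\prod_{P\in S}D_P(I)$ ($D_\emptyset=1$), $C_S(I)$ is $I$ with all $I_j$, $j\in\bigcup S$,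 deleted, and $\omega_I=\sum_{S\in \mathrm{SIF}_d}(-1)^{c(S)}D_S(I)\,d_{C_S(I)}$. *)

(* Defs.v *)
From HB Require Import structures.
From mathcomp Require Import all_boot all_order all_algebra.
Set Implicit Arguments. Unset Strict Implicit. Unset Printing Implicit Defensive.
Import Order.TTheory GRing.Theory Num.Theory.
Local Open Scope ring_scope.

(* Indices [5] are modelled by 'I_5 (0-based); positions [d] by 'I_d (0-based). *)

Definition inversions (s : seq nat) : nat :=
  \sum_(a < size s) \sum_(b < size s | (a < b)%N)
     ((nth 0%N s b) < (nth 0%N s a))%N.

(* t_{ijkl}: the fifth element of [5] (meaningful when i,j,k,l are distinct) *)
Definition tt (i j k l : 'I_5) : 'I_5 :=
  odflt ord0 [pick x : 'I_5 | x \notin [:: i; j; k; l]].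

Definition eps (i j k l : 'I_5) : int :=
  if uniq [:: i; j; k; l]
  then (-1) ^+ inversions [seq nat_of_ord x | x <- [:: i; j; k; l; tt i j k l]]
  else 0.

Section Omega.
Variables (K : fieldType) (A : algType K).
Variables (dd : 'I_5 -> A) (dgen : 'I_5 -> 'I_5 -> A).

Definition Dpair (n : nat) (I : 'I_n -> 'I_5 * 'I_5) (k l : 'I_n) : A :=
  (2%:R^-1 : K) *:
    ((-1) ^+ (k + l)%N * (eps (I k).1 (I k).2 (I l).1 (I l).2)%:~R
       * dd (tt (I k).1 (I k).2 (I l).1 (I l).2)).

Definition Dset (n : nat) (I : 'I_n -> 'I_5 * 'I_5) (P : {set 'I_n}) : A :=
  match enum P with [:: k; l] => Dpair I k l | _ => 0 end.

Definition DS (n : nat) (I : 'I_n -> 'I_5 * 'I_5) (S : {set {set 'I_n}}) : A :=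
  \prod_(P in S) Dset I P.

Definition dC (n : nat) (I : 'I_n -> 'I_5 * 'I_5) (S : {set {set 'I_n}}) : A :=
  \prod_(j < n | j \notin cover S) dgen (I j).1 (I j).2.

End Omega.

Definition sif (n : nat) : {set {set {set 'I_n}}} :=
  [set S : {set {set 'I_n}} | [forall P in S, #|P| == 2%N] && trivIset S].

Definition strictly_between (n : nat) (x h m : 'I_n) : bool :=
  (minn h m < x < maxn h m)%N.

Definition crossing (n : nat) (P Q : {set 'I_n}) : bool :=
  match enum P, enum Q with
  | [:: k; l], [:: h; m] => strictly_between k h m (+) strictly_between l h m
  | _, _ => false
  end.

(* c(S): number of (unordered) crossing pairs in S; ordered pairs counted / 2 *)
Definition ncross (n : nat) (S : {set {set 'I_n}}) : nat :=
  (#|[set PQ : {set 'I_n} * {set 'I_n} |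
       [&& PQ.1 \in S, PQ.2 \in S & crossing PQ.1 PQ.2]]|)./2.

Definition omega (K : fieldType) (A : algType K)
    (dd : 'I_5 -> A) (dgen : 'I_5 -> 'I_5 -> A)
    (n : nat) (I : 'I_n -> 'I_5 * 'I_5) : A :=
  \sum_(S in sif n) (-1) ^+ ncross S * DS dd I S * dC dgen I S.

Definition bar (p : 'I_5 * 'I_5) : 'I_5 * 'I_5 := (p.2, p.1).

(* Main.v *)
Require Import Defs.
From HB Require Import structures.
From mathcomp Require Import all_boot all_order all_algebra.
From mathcomp Require Import all_fingroup zify.
From Stdlib Require Import FunctionalExtensionality.
Import Order.TTheory GRing.Theory Num.Theory.

Module Part1.
Set Implicit Arguments. Unset Strict Implicit. Unset Printing Implicit Defensive.
Local Open Scope ring_scope.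

Lemma inv5 (a b c d e : nat) : inversions [:: a; b; c; d; e] =
  ((b < a) + (c < a) + (d < a) + (e < a) + (c < b) + (d < b) + (e < b)
   + (d < c) + (e < c) + (e < d))%N.
Proof.
rewrite /inversions /=.
rewrite !big_ord_recl !big_ord0 /=.
do 5! (rewrite big_mkcond /= !big_ord_recl big_ord0 /=).
rewrite /bump /=.
lia.
Qed.

Lemma sign_lem1 (x y : nat) : x = y.+1 -> (-1) ^+ x = - (-1) ^+ y :> int.
Proof. by move=> ->; rewrite exprS mulN1r. Qed.

Lemma sign_lem2 (x y : nat) : y = x.+1 -> (-1) ^+ x = - (-1) ^+ y :> int.
Proof. by move=> ->; rewrite exprS mulN1r opprK. Qed.

Lemma sign_lem3 (x y c : nat) : (x + 2 * c = y + 4)%N -> (-1) ^+ x = (-1) ^+ y :> int.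
Proof.
move=> H.
rewrite mul2n in H.
have Ho : odd x = odd y.
  by move/(congr1 odd): H; rewrite !oddD odd_double; case: (odd x); case: (odd y).
by rewrite -signr_odd Ho signr_odd.
Qed.

Lemma tt_swap1 (i j k l : 'I_5) : tt j i k l = tt i j k l.
Proof.
rewrite /tt; congr odflt; apply: eq_pick => x /=.
by rewrite !inE; case: (x == i); case: (x == j).
Qed.

Lemma tt_swapP (i j k l : 'I_5) : tt k l i j = tt i j k l.
Proof.
rewrite /tt; congr odflt; apply: eq_pick => x /=.
by rewrite !inE; case: (x == i); case: (x == j); case: (x == k); case: (x == l).
Qed.

Lemma eps_swap1 (i j k l : 'I_5) : eps j i k l = - eps i j k l.
Proof.
rewrite /eps tt_swap1.
have -> : uniq [:: j; i; k; l] = uniq [:: i; j; k; l].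
  by apply: perm_uniq; apply/seq.permP => a /=; lia.
case: ifP => [Hu|]; last by rewrite oppr0.
rewrite /= !inv5.
case: (ltngtP i j) => h.
- by apply: sign_lem1; lia.
- by apply: sign_lem2; lia.
- by move: Hu; rewrite /= (val_inj h) !inE eqxx.
Qed.

Lemma eps_swapP (i j k l : 'I_5) : eps k l i j = eps i j k l.
Proof.
rewrite /eps tt_swapP.
have -> : uniq [:: k; l; i; j] = uniq [:: i; j; k; l].
  by apply: perm_uniq; apply/seq.permP => a /=; lia.
case: ifP => [Hu|] //.
move: Hu; rewrite /= !inE !negb_or -!val_eqE /= => Hu.
rewrite /= !inv5.
apply: (@sign_lem3 _ _ ((k < i) + (l < i) + (k < j) + (l < j))%N).
lia.
Qed.

End Part1.
Import Part1.

Module Part2.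
Set Implicit Arguments. Unset Strict Implicit. Unset Printing Implicit Defensive.

Definition swn (p x : nat) := if x == p then p.+1 else if x == p.+1 then p else x.
Definition sbn (x h m : nat) : bool := (minn h m < x < maxn h m).
Definition crn (k l h m : nat) : bool := sbn k h m (+) sbn l h m.

Lemma sbn_sw p x h m : x != h -> x != m -> h != m ->
  ~~ ((h == p) && (m == p.+1) || (h == p.+1) && (m == p)) ->
  sbn (swn p x) (swn p h) (swn p m) =
  sbn x h m (+) ((x == p) && ((h == p.+1) || (m == p.+1)) || (x == p.+1) && ((h == p) || (m == p))).
Proof.
rewrite /swn /sbn.
case: (x =P p) => hx1; case: (x =P p.+1) => hx2;
case: (h =P p) => hh1; case: (h =P p.+1) => hh2;
case: (m =P p) => hm1; case: (m =P p.+1) => hm2 => //=; try lia;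
 apply/idP/idP; lia.
Qed.

Lemma crn_sw p k l h m :
  k != l -> k != h -> k != m -> l != h -> l != m -> h != m ->
  ~~ ((k == p) && (l == p.+1) || (k == p.+1) && (l == p)) ->
  ~~ ((h == p) && (m == p.+1) || (h == p.+1) && (m == p)) ->
  crn (swn p k) (swn p l) (swn p h) (swn p m) =
  crn k l h m (+) (((k == p) || (l == p)) && ((h == p.+1) || (m == p.+1)) ||
                   ((k == p.+1) || (l == p.+1)) && ((h == p) || (m == p))).
Proof.
move=> H1 H2 H3 H4 H5 H6 H7 H8.
rewrite /crn !sbn_sw //.
move: (sbn k h m) (sbn l h m) => b1 b2.
move: H1 H2 H3 H4 H5 H6 H7 H8.
case: (k =P p) => ?; case: (k =P p.+1) => ?; case: (l =P p) => ?; case: (l =P p.+1) => ?;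
case: (h =P p) => ?; case: (h =P p.+1) => ?; case: (m =P p) => ?; case: (m =P p.+1) => ? /=;
move=> *; first [by case: b1; case: b2 | exfalso; lia].
Qed.

Lemma crn_sym k l h m :
  k != l -> k != h -> k != m -> l != h -> l != m -> h != m ->
  crn k l h m = crn h m k l.
Proof.
move=> *; rewrite /crn /sbn.
case E1: (minn h m < k < maxn h m); case E2: (minn h m < l < maxn h m);
case E3: (minn k l < h < maxn k l); case E4: (minn k l < m < maxn k l) => //=; lia.
Qed.

Lemma crn_diag k l : k != l -> crn k l k l = false.
Proof.
move=> *; rewrite /crn /sbn.
case E1: (minn k l < k < maxn k l); case E2: (minn k l < l < maxn k l) => //=; lia.
Qed.

Lemma crn_C1 k l h m : crn l k h m = crn k l h m.
Proof. by rewrite /crn addbC. Qed.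

Lemma crn_C2 k l h m : crn k l m h = crn k l h m.
Proof. by rewrite /crn /sbn minnC maxnC. Qed.

Lemma enum_set2 (T : finType) (x y : T) : x != y ->
  enum [set x; y] = [:: x; y] \/ enum [set x; y] = [:: y; x].
Proof.
move=> xy.
have Hs : size (enum [set x; y]) = 2 by rewrite -cardE cards2 xy.
have Hu := enum_uniq (mem [set x; y]).
have Hx : x \in enum [set x; y] by rewrite mem_enum !inE eqxx.
have Hy : y \in enum [set x; y] by rewrite mem_enum !inE eqxx orbT.
move: Hs Hu Hx Hy; case: (enum _) => [|a [|b [|]]] //= _.
rewrite !inE andbT => ab /orP[]/eqP hx /orP[]/eqP hy; subst.
- by rewrite eqxx in xy.
- by left.
- by right.
- by rewrite eqxx in xy.
Qed.

Lemma crossing_set2 n (k l h m : 'I_n) : k != l -> h != m ->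
  crossing [set k; l] [set h; m] = crn k l h m.
Proof.
move=> kl hm; rewrite /crossing.
case: (enum_set2 kl) => ->; case: (enum_set2 hm) => -> /=.
- by [].
- by rewrite [RHS]crn_C2.
- by rewrite [RHS]crn_C1.
- by rewrite [RHS]crn_C1 crn_C2.
Qed.

End Part2.
Import Part2.

Module Part3.
Set Implicit Arguments. Unset Strict Implicit. Unset Printing Implicit Defensive.

Lemma ord_neq n (a b : 'I_n) : a != b -> nat_of_ord a != nat_of_ord b.
Proof. by []. Qed.

Lemma sbn_adj x q : sbn x q q.+1 = false.
Proof. rewrite /sbn; apply/negP; lia. Qed.

Lemma sbn_adj2 q h m : h != q -> h != q.+1 -> m != q -> m != q.+1 ->
  sbn q h m = sbn q.+1 h m.
Proof. rewrite /sbn => *; apply/idP/idP; lia. Qed.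

Section SifFacts.
Variable n : nat.
Implicit Types (S : {set {set 'I_n}}) (P Q : {set 'I_n}).

Lemma sifE S : (S \in sif n) = [forall P in S, #|P| == 2] && trivIset S.
Proof. by rewrite inE. Qed.

Lemma sif_card S P : S \in sif n -> P \in S -> #|P| = 2.
Proof. by rewrite sifE => /andP[/forall_inP H _] /H /eqP. Qed.

Lemma sif_disj S P Q : S \in sif n -> P \in S -> Q \in S -> P != Q -> [disjoint P & Q].
Proof. by rewrite sifE => /andP[_ /trivIsetP H]; apply: H. Qed.

Lemma sif_uniq S P Q x : S \in sif n -> P \in S -> Q \in S -> x \in P -> x \in Q -> P = Q.
Proof.
move=> HS HP HQ xP xQ; apply/eqP; apply/negP => /negP PQ.
by move: (disjointFr (sif_disj HS HP HQ PQ) xP); rewrite xQ.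
Qed.

Lemma set2_rep P : #|P| = 2 -> exists k l, k != l /\ P = [set k; l].
Proof. by move/eqP/cards2P. Qed.

Lemma cover_in S x : (x \in cover S) = [exists P in S, x \in P].
Proof.
apply/bigcupP/existsP => [[P PS xP]|[P /andP[PS xP]]]; first by exists P; rewrite PS.
by exists P.
Qed.

Lemma in_cover S P x : P \in S -> x \in P -> x \in cover S.
Proof. by move=> PS xP; rewrite cover_in; apply/existsP; exists P; rewrite PS. Qed.

Lemma set2_eq P (a b : 'I_n) : #|P| = 2 -> a != b -> a \in P -> b \in P -> P = [set a; b].
Proof.
move=> cP ab aP bP; apply/eqP; rewrite eq_sym eqEcard cP cards2 ab leqnn andbT.
by apply/subsetP => x; rewrite !inE => /orP[]/eqP->.
Qed.

Lemma disj_set2 (k l h m : 'I_n) : [disjoint [set k; l] & [set h; m]] ->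
  [/\ k != h, k != m, l != h & l != m].
Proof.
move=> Dj.
have kQ : (k \in [set h; m]) = false by apply: (disjointFr Dj); rewrite !inE eqxx.
have lQ : (l \in [set h; m]) = false by apply: (disjointFr Dj); rewrite !inE eqxx orbT.
by move: kQ lQ; rewrite !inE => /norP[kh km] /norP[lh lm].
Qed.

Lemma cross_sym S P Q : S \in sif n -> P \in S -> Q \in S -> crossing P Q = crossing Q P.
Proof.
move=> HS PS QS; case: (eqVneq P Q) => [->//|PQ].
have Dj := sif_disj HS PS QS PQ.
have [k [l [kl EP]]] := set2_rep (sif_card HS PS).
have [h [m [hm EQ]]] := set2_rep (sif_card HS QS).
subst P Q.
have [kh km lh lm] := disj_set2 Dj.
rewrite !crossing_set2 // crn_sym //; exact: ord_neq.
Qed.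

End SifFacts.

Lemma card_flip (R : pzRingType) (T : finType) (X Z : {set T}) a b :
  a != b -> (a \in X) = (b \in X) ->
  (forall x, (x \in Z) = (x \in X) (+) ((x == a) || (x == b))) ->
  ((-1) ^+ (#|Z|./2) = - (-1) ^+ (#|X|./2) :> R)%R.
Proof.
move=> ab abX HZ.
have key : forall X' Z' : {set T}, a \in X' -> b \in X' ->
    (forall x, (x \in Z') = (x \in X') && ~~ ((x == a) || (x == b))) ->
    #|X'| = (#|Z'|).+2.
  move=> X' Z' aX bX HZ'.
  rewrite (cardsD1 a) aX (cardsD1 b) !inE eq_sym ab bX /= add1n.
  congr (_.+2); apply: eq_card => x; rewrite !inE HZ' negb_or.
  by case: (x == a); case: (x == b); rewrite ?andbF ?andbT.
case aX : (a \in X).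
- have bX : b \in X by rewrite -abX.
  have HZ' : forall x, (x \in Z) = (x \in X) && ~~ ((x == a) || (x == b)).
    move=> x; rewrite HZ.
    case xa: (x == a); first by rewrite (eqP xa) aX.
    case xb: (x == b); first by rewrite (eqP xb) bX.
    by case: (x \in X).
  by rewrite (key X Z aX bX HZ') /= exprS mulN1r opprK.
- have aZ : a \in Z by rewrite HZ aX eqxx.
  have bZ : b \in Z by rewrite HZ -abX aX eqxx orbT.
  have HX' : forall x, (x \in X) = (x \in Z) && ~~ ((x == a) || (x == b)).
    move=> x; rewrite HZ.
    case xa: (x == a); first by rewrite (eqP xa) aX.
    case xb: (x == b); first by rewrite (eqP xb) -abX aX.
    by case: (x \in X).
  by rewrite (key Z X aZ bZ HX') /= exprS mulN1r.
Qed.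

Section Swap.
Variable n : nat.
Variables p p' : 'I_n.
Hypothesis hp : nat_of_ord p' = (nat_of_ord p).+1.
Implicit Types (S : {set {set 'I_n}}) (P Q : {set 'I_n}).

Definition sw := tperm p p'.
Definition sP P := sw @: P.
Definition sS S := [set sP P | P in S].
Definition pp := [set p; p'].

Lemma pp_neq : p != p'.
Proof. by apply/eqP => E; move: hp; rewrite E; lia. Qed.

Lemma swK : involutive sw.
Proof. exact: tpermK. Qed.

Lemma sw_val (x : 'I_n) : nat_of_ord (sw x) = swn p x.
Proof.
rewrite /sw /swn; case: tpermP => [->|->|hx hy].
- by rewrite eqxx hp.
- by rewrite hp /= eqxx; case: eqP => // H; exfalso; lia.
- have -> : (nat_of_ord x == p) = false by rewrite val_eqE; apply/eqP.
  by rewrite -hp val_eqE; case: eqP.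
Qed.

Lemma swE (x y : 'I_n) : (sw x == y) = (x == sw y).
Proof. by rewrite (canF_eq swK). Qed.

Lemma inSP x P : (x \in sP P) = (sw x \in P).
Proof.
apply/imsetP/idP => [[y yP ->]|H]; first by rewrite swK.
by exists (sw x); rewrite ?swK.
Qed.

Lemma sPK : involutive sP.
Proof. by move=> P; apply/setP => x; rewrite !inSP swK. Qed.

Lemma inSS P S : (P \in sS S) = (sP P \in S).
Proof.
apply/imsetP/idP => [[Q QS ->]|H]; first by rewrite sPK.
by exists (sP P); rewrite ?sPK.
Qed.

Lemma sSK : involutive sS.
Proof. by move=> S; apply/setP => P; rewrite !inSS sPK. Qed.

Lemma card_sP P : #|sP P| = #|P|.
Proof. exact: card_imset (@perm_inj _ sw). Qed.

Lemma sP_set2 (k l : 'I_n) : sP [set k; l] = [set sw k; sw l].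
Proof. by apply/setP => x; rewrite inSP !inE !swE. Qed.

Lemma inCS x S : (x \in cover (sS S)) = (sw x \in cover S).
Proof.
rewrite !cover_in; apply/existsP/existsP => [[B /andP[BS xB]]|[C /andP[CS xC]]].
- by exists (sP B); rewrite -inSS -inSP sPK BS.
- by exists (sP C); rewrite inSS sPK CS inSP.
Qed.

Lemma sif_sS1 S : S \in sif n -> sS S \in sif n.
Proof.
move=> HS; rewrite sifE; apply/andP; split.
  apply/forall_inP => P; rewrite inSS => /(sif_card HS).
  by rewrite card_sP => ->.
apply/trivIsetP => A B; rewrite !inSS => HA HB AB.
have AB' : sP A != sP B by apply: contra AB => /eqP/(can_inj sPK) ->.
have := sif_disj HS HA HB AB'.
rewrite -!setI_eq0 => /eqP H; apply/eqP/setP => x; rewrite !inE.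
apply/negP => /andP[xA xB].
by have := in_set0 (sw x); rewrite -H inE -!inSP sPK xA sPK xB.
Qed.

Lemma sif_sS S : (sS S \in sif n) = (S \in sif n).
Proof.
apply/idP/idP => [H|]; last exact: sif_sS1.
by rewrite -(sSK S); apply: sif_sS1.
Qed.

Lemma in_pp x : (x \in pp) = (x == p) || (x == p').
Proof. by rewrite !inE. Qed.

Lemma pp_sub P : #|P| = 2 -> p \in P -> p' \in P -> P = pp.
Proof. move=> cP pP p'P; exact: set2_eq cP pp_neq pP p'P. Qed.

Lemma sS_fix S : S \in sif n -> (pp \in S) || (p \notin cover S) && (p' \notin cover S) ->
  sS S = S.
Proof.
move=> HS H.
have fixP : forall P, P \in S -> sP P = P.
  move=> P PS; case: (P =P pp) => [->|Ppp].
    by rewrite /pp sP_set2 /sw tpermL tpermR setUC.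
  apply/setP => x; rewrite inSP.
  have Hx : forall y, y \in P -> (y != p) && (y != p').
    move=> y yP; case/orP: H => [ppS|/andP[Hp Hp']].
    - have Dj := sif_disj HS PS ppS (introN eqP Ppp).
      by apply/andP; split; apply/eqP => E; subst y;
        move: (disjointFr Dj yP); rewrite !inE eqxx ?orbT.
    - by apply/andP; split; apply/eqP => E; subst y;
        [move: Hp | move: Hp']; rewrite (in_cover PS yP).
  case xP : (x \in P).
    by move: (Hx x xP) => /andP[h1 h2]; rewrite /sw tpermD 1?eq_sym // xP.
  apply/negbTE/negP => swP.
  move: (Hx _ swP) => /andP[h1 h2]; move: swP.
  by rewrite /sw tpermD 1?eq_sym // ?xP //; move: h1 h2; rewrite /sw;
     case: tpermP => // ->; rewrite eqxx.
apply/setP => P; rewrite inSS.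
apply/idP/idP => H1.
- by rewrite -(sPK P) -(fixP _ H1) sPK.
- by rewrite fixP.
Qed.



Lemma not_pp S (k l : 'I_n) : pp \notin S -> [set k; l] \in S ->
  ~~ ((nat_of_ord k == p) && (nat_of_ord l == (nat_of_ord p).+1) ||
      (nat_of_ord k == (nat_of_ord p).+1) && (nat_of_ord l == p)).
Proof.
move=> ppS PS; rewrite -hp.
apply/negP => /orP[]/andP[/eqP Ek /eqP El].
- have Ek' : k = p by apply: val_inj.
  have El' : l = p' by apply: val_inj.
  by move: PS ppS; rewrite Ek' El' /pp => ->.
- have Ek' : k = p' by apply: val_inj.
  have El' : l = p by apply: val_inj.
  by move: PS ppS; rewrite Ek' El' /pp setUC => ->.
Qed.

Lemma cross_sw S P Q : S \in sif n -> pp \notin S -> P \in S -> Q \in S ->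
  crossing (sP P) (sP Q) =
  crossing P Q (+) ((p \in P) && (p' \in Q) || (p' \in P) && (p \in Q)).
Proof.
move=> HS ppS PS QS.
case: (eqVneq P Q) => [<-|PQ].
  have [k [l [kl EP]]] := set2_rep (sif_card HS PS).
  have skl : sw k != sw l by rewrite (inj_eq perm_inj).
  have -> : (p \in P) && (p' \in P) || (p' \in P) && (p \in P) = false.
    rewrite andbC orbb; apply/negP => /andP[h1 h2].
    by move: ppS; rewrite -(pp_sub (sif_card HS PS) h2 h1) PS.
  by rewrite EP sP_set2 !crossing_set2 // !crn_diag.
have Dj := sif_disj HS PS QS PQ.
have [k [l [kl EP]]] := set2_rep (sif_card HS PS).
have [h [m [hm EQ]]] := set2_rep (sif_card HS QS).
subst P Q.
have [kh km lh lm] := disj_set2 Dj.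
have skl : sw k != sw l by rewrite (inj_eq perm_inj).
have shm : sw h != sw m by rewrite (inj_eq perm_inj).
rewrite !sP_set2 !crossing_set2 // !sw_val.
rewrite crn_sw //; try exact: ord_neq; try exact: (not_pp ppS).
congr (_ (+) _).
have E : forall a b : 'I_n, (a == b) = (nat_of_ord a == nat_of_ord b) by [].
by rewrite !inE !E hp !(eq_sym (nat_of_ord p)) !(eq_sym (nat_of_ord p).+1).
Qed.


Lemma ncross_sS (R : pzRingType) S : S \in sif n -> pp \notin S ->
  ((-1) ^+ ncross (sS S) =
   (-1) ^+ ((p \in cover S) && (p' \in cover S)) * (-1) ^+ ncross S :> R)%R.
Proof.
move=> HS ppS.
rewrite /ncross.
set X := [set PQ | [&& PQ.1 \in S, PQ.2 \in S & crossing PQ.1 PQ.2]].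
set Z := [set PQ : {set 'I_n} * {set 'I_n} |
           [&& PQ.1 \in S, PQ.2 \in S & crossing (sP PQ.1) (sP PQ.2)]].
pose f := fun PQ : {set 'I_n} * {set 'I_n} => (sP PQ.1, sP PQ.2).
have finj : injective f.
  by apply: (can_inj (g := f)) => -[P Q]; rewrite /f /= !sPK.
have -> : [set PQ | [&& PQ.1 \in sS S, PQ.2 \in sS S & crossing PQ.1 PQ.2]] = f @^-1: Z.
  by apply/setP => -[P Q]; rewrite !inE /= !inSS !sPK.
rewrite card_preimset //.
case: (boolP ((p \in cover S) && (p' \in cover S))) => [/andP[pc p'c]|nb].
- set P0 := pblock S p; set Q0 := pblock S p'.
  have P0S : P0 \in S := pblock_mem pc.
  have Q0S : Q0 \in S := pblock_mem p'c.
  have pP0 : p \in P0 by rewrite mem_pblock.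
  have p'Q0 : p' \in Q0 by rewrite mem_pblock.
  have P0Q0 : P0 != Q0.
    apply/negP => /eqP E; move: ppS.
    by rewrite -(pp_sub (sif_card HS P0S) pP0) ?P0S // E.
  have memE : forall P x, P \in S -> x \in cover S -> (x \in P) = (P == pblock S x).
    move=> P x PS xc; apply/idP/eqP => [xP|->]; last by rewrite mem_pblock.
    by apply: (sif_uniq HS PS (pblock_mem xc) xP); rewrite mem_pblock.
  rewrite expr1 mulN1r.
  apply: (@card_flip R _ X Z (P0, Q0) (Q0, P0)).
  + by rewrite xpair_eqE negb_and P0Q0.
  + by rewrite !inE /= P0S Q0S /= (cross_sym HS P0S Q0S).
  + move=> [P Q]; rewrite !inE /= !xpair_eqE.
    case PS : (P \in S); case QS : (Q \in S) => /=.
    * rewrite (cross_sw HS ppS PS QS) (memE P p) // (memE Q p') // (memE P p') // (memE Q p) //.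
    * have : Q != P0 by apply: contraFneq QS => ->.
      have : Q != Q0 by apply: contraFneq QS => ->.
      by move=> /negbTE-> /negbTE->; rewrite !andbF.
    * have : P != P0 by apply: contraFneq PS => ->.
      have : P != Q0 by apply: contraFneq PS => ->.
      by move=> /negbTE-> /negbTE->.
    * have : P != P0 by apply: contraFneq PS => ->.
      have : P != Q0 by apply: contraFneq PS => ->.
      by move=> /negbTE-> /negbTE->.
- rewrite expr0 mul1r; congr (GRing.exp (-1)%R (_ ./2)); apply: eq_card => -[P Q].
  rewrite !inE /=.
  case PS : (P \in S); case QS : (Q \in S) => //=.
  rewrite (cross_sw HS ppS PS QS).
  have -> : (p \in P) && (p' \in Q) || (p' \in P) && (p \in Q) = false.
    apply/negP => /orP[]/andP[h1 h2]; move: nb; 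
      by rewrite (in_cover PS h1) (in_cover QS h2).
  by rewrite addbF.
Qed.

Lemma cross_pp S Q : S \in sif n -> p \notin cover S -> p' \notin cover S ->
  Q \in S -> (crossing pp Q = false) /\ (crossing Q pp = false).
Proof.
move=> HS pc p'c QS.
have [h [m [hm EQ]]] := set2_rep (sif_card HS QS).
have hQ : h \in Q by rewrite EQ !inE eqxx.
have mQ : m \in Q by rewrite EQ !inE eqxx orbT.
have nE : forall x, x \in Q -> (nat_of_ord x != p) && (nat_of_ord x != (nat_of_ord p).+1).
  move=> x xQ; rewrite -hp; apply/andP; split; apply/negP => /eqP/val_inj E; subst x.
  - by move: pc; rewrite (in_cover QS xQ).
  - by move: p'c; rewrite (in_cover QS xQ).
move: (nE h hQ) (nE m mQ) => /andP[h1 h2] /andP[h3 h4].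
rewrite EQ /pp !crossing_set2 // ?pp_neq //.
rewrite /crn hp !sbn_adj /= sbn_adj2 //.
by rewrite addbb.
Qed.

Lemma ncross_U S : S \in sif n -> p \notin cover S -> p' \notin cover S ->
  ncross (pp |: S) = ncross S.
Proof.
move=> HS pc p'c.
have ppS : pp \notin S.
  by apply/negP => H; move: pc; rewrite (in_cover H) // !inE eqxx.
rewrite /ncross; congr (_ ./2); apply: eq_card => -[P Q]; rewrite !inE /=.
have ppc : crossing pp pp = false.
  by rewrite /pp crossing_set2 ?pp_neq // crn_diag // ord_neq // pp_neq.
case: (P =P pp) => [->|_] /=; case: (Q =P pp) => [->|_] /=;
  case PS: (P \in S); case QS: (Q \in S); rewrite /= ?ppc ?andbF //.
all: try by rewrite (cross_pp HS pc p'c PS).2 ?andbF.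
all: try by rewrite (cross_pp HS pc p'c QS).1 ?andbF.
all: try by rewrite (negbTE ppS).
Qed.

End Swap.

End Part3.
Import Part3.

Module Part4.
Set Implicit Arguments. Unset Strict Implicit. Unset Printing Implicit Defensive.
Local Open Scope ring_scope.

Section CommProd.
Variable R : pzRingType.

Lemma prod_front (T : eqType) (r : seq T) (F : T -> R) x :
  (forall a b, GRing.comm (F a) (F b)) -> x \in r ->
  \prod_(i <- r) F i = F x * \prod_(i <- rem x r) F i.
Proof.
move=> Fc; elim: r => [//|y r IH] /=.
rewrite inE big_cons; case: (eqVneq y x) => [->|yx] /= xr; first by [].
have xr' : x \in r by [].
by rewrite big_cons (IH xr') !mulrA Fc.
Qed.

Lemma perm_prod_comm (T : eqType) (r1 r2 : seq T) (F : T -> R) :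
  (forall a b, GRing.comm (F a) (F b)) -> perm_eq r1 r2 ->
  \prod_(i <- r1) F i = \prod_(i <- r2) F i.
Proof.
move=> Fc; elim: r1 r2 => [|x r1 IH] r2 Hp.
  by move: (perm_size Hp) => /esym/size0nil ->.
have xr2 : x \in r2 by rewrite -(perm_mem Hp) mem_head.
rewrite (prod_front Fc xr2) big_cons; congr (_ * _); apply: IH.
by rewrite -(perm_cons x); apply: perm_trans Hp _; apply: perm_to_rem.
Qed.

Definition fs (T : finType) (A : {pred T}) := [seq i <- index_enum T | i \in A].

Lemma fs_uniq (T : finType) (A : {pred T}) : uniq (fs A).
Proof. by rewrite filter_uniq // index_enum_uniq. Qed.

Lemma mem_fs (T : finType) (A : {pred T}) x : (x \in fs A) = (x \in A).
Proof. by rewrite mem_filter mem_index_enum andbT. Qed.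

Lemma prod_set_seq (T : finType) (A : {pred T}) (r : seq T) (F : T -> R) :
  (forall a b, GRing.comm (F a) (F b)) -> uniq r -> (forall x, (x \in r) = (x \in A)) ->
  \prod_(i in A) F i = \prod_(i <- r) F i.
Proof.
move=> Fc ur Hr; rewrite -big_filter; apply: perm_prod_comm => //.
by apply: uniq_perm; rewrite ?fs_uniq // => x; rewrite mem_fs Hr.
Qed.

Lemma comm_sign k (x : R) : (-1) ^+ k * x = x * (-1) ^+ k.
Proof.
rewrite -signr_odd; case: (odd k); rewrite ?expr0 ?expr1 ?mulN1r ?mulrN1 ?mul1r ?mulr1 //.
Qed.

Lemma prod_sign (T : Type) (r : seq T) (P : pred T) (a : T -> nat) (F : T -> R) :
  \prod_(i <- r | P i) ((-1) ^+ a i * F i) =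
  (-1) ^+ (\sum_(i <- r | P i) a i)%N * \prod_(i <- r | P i) F i.
Proof.
elim: r => [|x r IH]; first by rewrite !big_nil mulr1.
rewrite !big_cons; case: (P x) => //.
rewrite IH exprD -!mulrA; congr (_ * _).
by rewrite !mulrA comm_sign.
Qed.

Lemma sign_odd (m m' : nat) : odd m = odd m' -> (-1) ^+ m = (-1) ^+ m' :> R.
Proof. by move=> H; rewrite -signr_odd H signr_odd. Qed.

End CommProd.

Section Decomp.
Variable R : pzRingType.
Variable n : nat.
Variables p p' : 'I_n.
Hypothesis hp : nat_of_ord p' = (nat_of_ord p).+1.

Definition ext (F : 'I_n -> R) (k : nat) : R := oapp F 1 (insub k).

Definition Lf (F : 'I_n -> R) := \prod_(0 <= k < p) ext F k.
Definition Rf (F : 'I_n -> R) := \prod_(p.+2 <= k < n) ext F k.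

Lemma ext_val F (j : 'I_n) : ext F j = F j.
Proof. by rewrite /ext valK. Qed.

Lemma prod_decomp (F : 'I_n -> R) :
  \prod_(j < n) F j = Lf F * (F p * F p') * Rf F.
Proof.
have pn : (p.+2 <= n)%N by rewrite -hp; exact: ltn_ord.
rewrite (eq_bigr (fun j : 'I_n => ext F j)) => [|j _]; last by rewrite ext_val.
rewrite -(big_mkord xpredT (ext F)).
rewrite (big_cat_nat _ (n := p)) //=; last by lia.
rewrite (big_cat_nat _ (n := p.+2) (m := p)) //=; last by lia.
rewrite big_nat_recl // big_nat1 -hp !ext_val.
by rewrite /Lf /Rf hp !mulrA.
Qed.

Lemma LRf_eq (F1 F2 : 'I_n -> R) :
  (forall j, j != p -> j != p' -> F1 j = F2 j) -> Lf F1 = Lf F2 /\ Rf F1 = Rf F2.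
Proof.
move=> H; split; apply: eq_big_nat => k hk; rewrite /ext;
  case: insubP => //= j _ jk; apply: H; apply/negP => /eqP E; subst j; lia.
Qed.

End Decomp.

End Part4.
Import Part4.

Module Part5.
Set Implicit Arguments. Unset Strict Implicit. Unset Printing Implicit Defensive.
Local Open Scope ring_scope.

Section Alg.
Variables (K : fieldType) (A : algType K) (dd : 'I_5 -> A) (dgen : 'I_5 -> 'I_5 -> A).
Hypothesis hdd : forall i j, dd i * dd j = dd j * dd i.
Hypothesis hcent : forall i j k, dd i * dgen j k = dgen j k * dd i.

Definition Xd (m : nat) (e : int) (t : 'I_5) : A := (-1) ^+ m * e%:~R * dd t.

Lemma comm_sign1 (x : A) m : GRing.comm x ((-1) ^+ m).
Proof. by rewrite /GRing.comm comm_sign. Qed.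

Lemma comm_dd_Xd i m e t : GRing.comm (dd i) (Xd m e t).
Proof.
apply: commrM; first apply: commrM.
- exact: comm_sign1.
- exact: commr_int.
- exact: hdd.
Qed.

Lemma comm_dgen_Xd a b m e t : GRing.comm (dgen a b) (Xd m e t).
Proof.
apply: commrM; first apply: commrM.
- exact: comm_sign1.
- exact: commr_int.
- by rewrite /GRing.comm hcent.
Qed.

Lemma comm_Xd m e t m' e' t' : GRing.comm (Xd m e t) (Xd m' e' t').
Proof.
apply: commrM; first apply: commrM.
- exact: comm_sign1.
- exact: commr_int.
- apply: commr_sym; exact: comm_dd_Xd.
Qed.

Lemma comm_scale (x y : A) (a b : K) : GRing.comm x y -> GRing.comm (a *: x) (b *: y).
Proof.
by move=> H; rewrite /GRing.comm -!scalerAl -!scalerAr !scalerA H (mulrC a b).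
Qed.

Lemma comm_scale_r (x y : A) (b : K) : GRing.comm x y -> GRing.comm x (b *: y).
Proof. by move=> H; rewrite /GRing.comm -scalerAl -scalerAr H. Qed.

Lemma Dset_cases n (I : 'I_n -> 'I_5 * 'I_5) P :
  Dset dd I P = 0 \/ exists m e t, Dset dd I P = 2%:R^-1 *: Xd m e t.
Proof.
rewrite /Dset; case: (enum P) => [|k [|l [|]]]; auto.
by right; do 3 eexists; rewrite /Dpair.
Qed.

Lemma comm0 (x : A) : GRing.comm x 0.
Proof. by rewrite /GRing.comm mul0r mulr0. Qed.

Lemma comm_Dset n (I J : 'I_n -> 'I_5 * 'I_5) P Q : GRing.comm (Dset dd I P) (Dset dd J Q).
Proof.
case: (Dset_cases I P) => [->|[m [e [t ->]]]]; first exact: commr_sym (comm0 _).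
case: (Dset_cases J Q) => [->|[m' [e' [t' ->]]]]; first exact: comm0.
by apply: comm_scale; apply: comm_Xd.
Qed.

Lemma comm_Xd_Dset n (I : 'I_n -> 'I_5 * 'I_5) P m e t : GRing.comm (Xd m e t) (Dset dd I P).
Proof.
case: (Dset_cases I P) => [->|[m' [e' [t' ->]]]]; first exact: comm0.
by apply: comm_scale_r; apply: comm_Xd.
Qed.

Lemma comm_Xd_DS n (I : 'I_n -> 'I_5 * 'I_5) S m e t : GRing.comm (Xd m e t) (DS dd I S).
Proof. by apply: commr_prod => P _; apply: comm_Xd_Dset. Qed.

Lemma Dpair_sym n (I : 'I_n -> 'I_5 * 'I_5) k l : Dpair dd I k l = Dpair dd I l k.
Proof. by rewrite /Dpair addnC eps_swapP tt_swapP. Qed.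

Lemma Dset_set2 n (I : 'I_n -> 'I_5 * 'I_5) (k l : 'I_n) : k != l ->
  Dset dd I [set k; l] = Dpair dd I k l.
Proof. by move=> kl; rewrite /Dset; case: (enum_set2 kl) => -> //; exact: Dpair_sym. Qed.


Section SwapAlg.
Variable n : nat.
Variables p p' : 'I_n.
Hypothesis hp : nat_of_ord p' = (nat_of_ord p).+1.
Variable I : 'I_n -> 'I_5 * 'I_5.
Implicit Types (S : {set {set 'I_n}}).

Definition I' := fun x => I (sw p p' x).

Definition G (S : {set {set 'I_n}}) (j : 'I_n) : A :=
  if j \notin cover S then dgen (I j).1 (I j).2 else 1.

Lemma dC_G S : dC dgen I S = \prod_(j < n) G S j.
Proof. by rewrite /dC big_mkcond. Qed.

Lemma dC_sw S : dC dgen I' (sS p p' S) = \prod_(j < n) G S (sw p p' j).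
Proof. by rewrite /dC big_mkcond; apply: eq_bigr => j _; rewrite /G inCS. Qed.

Lemma E_ord (a b : 'I_n) : (a == b) = (nat_of_ord a == nat_of_ord b).
Proof. by []. Qed.

Lemma odd_sw (k : 'I_n) : odd (sw p p' k) = odd k (+) (k \in pp p p').
Proof.
rewrite sw_val // /swn !inE !E_ord hp.
case: eqP => [->|h1] /=; first by rewrite addbT.
case: eqP => [->|h2] /=; first by rewrite addbT negbK.
by rewrite addbF.
Qed.

Lemma sum_pp (C : {set 'I_n}) :
  (\sum_(x in C) (x \in pp p p') = (p \in C) + (p' \in C))%N.
Proof.
rewrite big_mkcond (bigD1 p) //= (bigD1 p') /=; last by rewrite eq_sym pp_neq.
rewrite big1 => [|x /andP[xp xp']].
  by rewrite !inE !eqxx orbT addn0; case: (p \in C); case: (p' \in C).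
by rewrite !inE (negbTE xp) (negbTE xp'); case: (x \in C).
Qed.

Lemma DS_sS S : S \in sif n ->
  DS dd I' (sS p p' S) = (-1) ^+ ((p \in cover S) + (p' \in cover S))%N * DS dd I S.
Proof.
move=> HS; rewrite /DS.
have -> : \prod_(Q in sS p p' S) Dset dd I' Q = \prod_(P in S) Dset dd I' (sP p p' P).
  have sPinj : injective (sP p p') by apply: can_inj (sPK p p').
  rewrite (prod_set_seq (r := map (sP p p') (fs (mem S)))).
  - by rewrite big_map big_filter.
  - by move=> a b; apply: comm_Dset.
  - by rewrite map_inj_uniq // fs_uniq.
  - by move=> Q; rewrite -{1}(sPK p p' Q) mem_map // mem_fs inSS.
rewrite (eq_bigr (fun P : {set 'I_n} => (-1) ^+ (\sum_(x in P) (x \in pp p p'))%N * Dset dd I P))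
  => [|P PS].
  rewrite prod_sign; congr (_ ^+ _ * _).
  have tS : trivIset S by move: HS; rewrite sifE => /andP[].
  by rewrite -(big_trivIset _ tS) sum_pp.
have [k [l [kl EP]]] := set2_rep (sif_card HS PS).
have skl : sw p p' k != sw p p' l by rewrite (inj_eq perm_inj).
subst P.
rewrite sP_set2 !Dset_set2 //.
rewrite big_setU1 /=; last by rewrite inE.
rewrite big_set1 /Dpair /I' !swK -scalerAr; congr (_ *: _).
rewrite !mulrA -exprD; congr (_ * _ * _); apply: sign_odd.
rewrite !oddD !odd_sw !oddb.
by case: (odd k); case: (odd l); case: (k \in pp p p'); case: (l \in pp p p').
Qed.


Definition T (J : 'I_n -> 'I_5 * 'I_5) S := (-1) ^+ ncross S * DS dd J S * dC dgen J S.

Lemma T_I S : T I S = (-1) ^+ ncross S * DS dd I S *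
  (Lf p (G S) * (G S p * G S p') * Rf p (G S)).
Proof. by rewrite /T dC_G (prod_decomp hp). Qed.

Lemma T_I' S : S \in sif n -> T I' (sS p p' S) = (-1) ^+ ncross (sS p p' S) *
  ((-1) ^+ ((p \in cover S) + (p' \in cover S))%N * DS dd I S) *
  (Lf p (G S) * (G S p' * G S p) * Rf p (G S)).
Proof.
move=> HS.
have [HL HR] : Lf p (fun j => G S (sw p p' j)) = Lf p (G S) /\
               Rf p (fun j => G S (sw p p' j)) = Rf p (G S).
  by apply: (LRf_eq hp) => j h1 h2; rewrite /sw tpermD // eq_sym.
by rewrite /T DS_sS // dC_sw (prod_decomp hp) HL HR /sw tpermL tpermR.
Qed.

Lemma cover_U1 x S : (x \in cover (pp p p' |: S)) = (x \in pp p p') || (x \in cover S).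
Proof.
rewrite !cover_in; apply/existsP/orP => [[P /andP[PS xP]]|[xpp|/existsP[P /andP[PS xP]]]].
- move: PS; rewrite in_setU1 => /orP[/eqP E|PS']; first by left; rewrite -E.
  by right; apply/existsP; exists P; rewrite PS' xP.
- by exists (pp p p'); rewrite setU11 xpp.
- by exists P; rewrite setU1r.
Qed.

Lemma sifU1 S : pp p p' \notin S ->
  (pp p p' |: S \in sif n) = (S \in sif n) && (p \notin cover S) && (p' \notin cover S).
Proof.
move=> ppS; apply/idP/idP.
- move=> H2.
  have HS : S \in sif n.
    rewrite sifE; apply/andP; split.
      by apply/forall_inP => P PS; rewrite (sif_card H2) // setU1r.
    move: H2; rewrite sifE => /andP[_]; apply: trivIsetS; exact: subsetUr.
  have ppS2 : pp p p' \in pp p p' |: S by rewrite setU11.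
  rewrite HS /=; apply/andP; split; apply/negP => pc.
  + have PS := pblock_mem pc.
    have pP : p \in pblock S p by rewrite mem_pblock.
    have ppp : p \in pp p p' by rewrite !inE eqxx.
    have := sif_uniq H2 (setU1r _ PS) ppS2 pP ppp.
    by move=> E; move: ppS; rewrite -E PS.
  + have PS := pblock_mem pc.
    have pP : p' \in pblock S p' by rewrite mem_pblock.
    have p'pp : p' \in pp p p' by rewrite !inE eqxx orbT.
    have := sif_uniq H2 (setU1r _ PS) ppS2 pP p'pp.
    by move=> E; move: ppS; rewrite -E PS.
- move=> /andP[/andP[HS pc] p'c]; rewrite sifE; apply/andP; split.
    apply/forall_inP => P; rewrite in_setU1 => /orP[/eqP->|PS].
      by rewrite cards2 (pp_neq hp).
    by rewrite (sif_card HS PS).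
  have Dpp : forall B, B \in S -> [disjoint pp p p' & B].
    move=> B BS; rewrite -setI_eq0; apply/eqP/setP => x; rewrite !inE.
    apply/negP => /andP[/orP[]/eqP-> xB].
    - by move: pc; rewrite (in_cover BS xB).
    - by move: p'c; rewrite (in_cover BS xB).
  apply/trivIsetP => B1 B2; rewrite !inE => /orP[/eqP->|B1S] /orP[/eqP->|B2S] B12.
  + by rewrite eqxx in B12.
  + exact: Dpp.
  + by rewrite disjoint_sym; apply: Dpp.
  + exact: sif_disj HS B1S B2S B12.
Qed.


Lemma sign_cancel (c D M : A) (b e : nat) : odd (b + e) ->
  (-1) ^+ b * c * ((-1) ^+ e * D) * M + c * D * M = 0.
Proof.
move=> Ho.
have -> : (-1) ^+ b * c * ((-1) ^+ e * D) = - (c * D).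
  rewrite mulrA -(mulrA _ c) -(comm_sign e c) mulrA -exprD -signr_odd Ho /=.
  by rewrite expr1 mulN1r mulNr.
by rewrite mulNr addNr.
Qed.

Lemma Cc_zero S : S \in sif n -> pp p p' \notin S ->
  ~~ ((p \notin cover S) && (p' \notin cover S)) ->
  T I' (sS p p' S) + T I S = 0.
Proof.
move=> HS ppS nc.
rewrite T_I' // T_I (ncross_sS hp) //.
have -> : G S p' * G S p = G S p * G S p'.
  move: nc; rewrite /G; case: (p \in cover S); case: (p' \in cover S) => //= _;
  by rewrite ?mul1r ?mulr1.
apply: sign_cancel.
by move: nc; case: (p \in cover S); case: (p' \in cover S).
Qed.

Hypothesis hK : [pchar K] =i pred0.
Hypothesis hbr : forall i j k l,
  dgen i j * dgen k l + dgen k l * dgen i j = (eps i j k l)%:~R * dd (tt i j k l).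

Lemma Cb_zero S : S \in sif n -> pp p p' \notin S ->
  p \notin cover S -> p' \notin cover S ->
  T I' (sS p p' (pp p p' |: S)) + T I (pp p p' |: S) + (T I' (sS p p' S) + T I S) = 0.
Proof.
move=> HS ppS pc p'c.
have HS2 : pp p p' |: S \in sif n by rewrite sifU1 // HS pc p'c.
have ppS2 : pp p p' \in pp p p' |: S by rewrite setU11.
rewrite T_I' // T_I T_I' // T_I.
rewrite (sS_fix HS2) ?ppS2 // (sS_fix HS) ?pc ?p'c ?orbT //.
have G2p : G (pp p p' |: S) p = 1 by rewrite /G cover_U1 !inE eqxx.
have G2p' : G (pp p p' |: S) p' = 1 by rewrite /G cover_U1 !inE eqxx orbT.
have Gp : G S p = dgen (I p).1 (I p).2 by rewrite /G pc.
have Gp' : G S p' = dgen (I p').1 (I p').2 by rewrite /G p'c.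
have [HL HR] : Lf p (G (pp p p' |: S)) = Lf p (G S) /\ Rf p (G (pp p p' |: S)) = Rf p (G S).
  apply: (LRf_eq hp) => j h1 h2.
  by rewrite /G cover_U1 !inE (negbTE h1) (negbTE h2).
have DS2 : DS dd I (pp p p' |: S) = Dpair dd I p p' * DS dd I S.
  rewrite /DS (prod_set_seq (r := pp p p' :: fs (mem S))).
  - by rewrite big_cons big_filter /pp Dset_set2 // pp_neq.
  - by move=> a b; apply: comm_Dset.
  - by rewrite /= mem_fs ppS fs_uniq.
  - by move=> Q; rewrite inE mem_fs in_setU1.
rewrite G2p G2p' Gp Gp' HL HR DS2 (ncross_U hp HS pc p'c) !cover_U1 !inE !eqxx /=.
rewrite (negbTE pc) (negbTE p'c) /=.
set M0 := (eps (I p).1 (I p).2 (I p').1 (I p').2)%:~R * dd (tt (I p).1 (I p).2 (I p').1 (I p').2).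
have M0X : M0 = Xd 0 (eps (I p).1 (I p).2 (I p').1 (I p').2) (tt (I p).1 (I p).2 (I p').1 (I p').2).
  by rewrite /Xd expr0 mul1r.
have two0 : (2%:R : K) != 0 by rewrite ((pcharf0P K).1 hK 2).
have HD : Dpair dd I p p' + Dpair dd I p p' = - M0.
  have sgn : (-1) ^+ (p + p')%N = -1 :> A.
    by rewrite hp addnS exprS -signr_odd oddD addbb expr0 mulr1.
  rewrite /Dpair sgn mulN1r mulNr -/M0 -scalerDl.
  have -> : (2%:R : K)^-1 + 2%:R^-1 = 1.
    transitivity (2%:R * (2%:R : K)^-1); first by rewrite mulr_natl mulr2n.
    exact: mulfV.
  by rewrite scale1r.
have cD : GRing.comm M0 (DS dd I S) by rewrite M0X; apply: comm_Xd_DS.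
have cL : GRing.comm M0 (Lf p (G S)).
  apply: commr_prod => k _; rewrite /ext; case: insub => [j|] /=; last exact: commr1.
  rewrite /G; case: ifP => _; last exact: commr1.
  by rewrite M0X; apply: commr_sym; apply: comm_dgen_Xd.
have Hg := hbr (I p).1 (I p).2 (I p').1 (I p').2.
rewrite -/M0 in Hg.
clear M0X.
move: HD cD cL Hg.
move: (Dpair dd I p p') (DS dd I S) (Lf p (G S)) (Rf p (G S)) ((-1) ^+ ncross S) => Dp D L R c.
move: (dgen (I p).1 (I p).2) (dgen (I p').1 (I p').2) M0 => g g' M.
move=> HD cD cL Hg.
rewrite orbT /= expr2 mulN1r opprK expr0 !mul1r !mulr1.
have E1 : c * (Dp * D) * (L * R) + c * (Dp * D) * (L * R) = - (c * D * M * (L * R)).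
  rewrite -mulrDl -mulrDr -mulrDl HD mulNr cD.
  by rewrite !mulrA mulrN !mulNr !mulrA.
have E2 : c * D * (L * (g' * g) * R) + c * D * (L * (g * g') * R) = c * D * M * (L * R).
  rewrite -mulrDr -mulrDl -mulrDr addrC Hg -cL.
  by rewrite !mulrA.
by rewrite E1 E2 addNr.
Qed.


Lemma omega_swap : omega dd dgen I' = - omega dd dgen I.
Proof.
rewrite /omega.
rewrite (reindex_inj (can_inj (sSK p p'))) /=.
under eq_bigl => S do rewrite sif_sS.
apply/eqP; rewrite -subr_eq0 opprK -big_split /=; apply/eqP.
transitivity (\sum_(S in sif n) (T I' (sS p p' S) + T I S)); first by [].
rewrite (bigID (fun S => pp p p' \in S)) /=.
rewrite [X in _ + X](bigID (fun S => (p \notin cover S) && (p' \notin cover S))) /=.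
rewrite [X in _ + (_ + X)]big1 ?addr0 => [|S /andP[/andP[HS ppS] nc]]; last exact: Cc_zero.
rewrite (reindex_onto (fun S => pp p p' |: S) (fun S => S :\ pp p p')) /=; last first.
  by move=> S /andP[_ ppS]; rewrite setD1K.
rewrite (eq_bigl (fun S => ((S \in sif n) && (pp p p' \notin S)) &&
                           ((p \notin cover S) && (p' \notin cover S)))) => [|S].
  rewrite -big_split /=; apply: big1 => S /andP[/andP[HS ppS] /andP[pc p'c]].
  exact: Cb_zero.
case ppS : (pp p p' \in S).
- have -> : ((pp p p' |: S) :\ pp p p' == S) = false.
    apply/negP => /eqP E.
    have : pp p p' \in (pp p p' |: S) :\ pp p p' by rewrite E.
    by rewrite !inE eqxx.
  by rewrite !andbF.
- rewrite setU1K ?ppS // eqxx setU11 andbT sifU1 ?ppS //.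
  by rewrite /= !andbT -!andbA.
Qed.

End SwapAlg.

End Alg.

End Part5.
Import Part5.

Module Part6.
Set Implicit Arguments. Unset Strict Implicit. Unset Printing Implicit Defensive.
Local Open Scope ring_scope.

Section Bar.
Variables (K : fieldType) (A : algType K) (dd : 'I_5 -> A) (dgen : 'I_5 -> 'I_5 -> A).
Hypothesis hskew : forall i j, dgen i j = - dgen j i.
Hypothesis hdd : forall i j, dd i * dd j = dd j * dd i.

Lemma omega_bar n (I : 'I_n -> 'I_5 * 'I_5) (j : 'I_n) :
  omega dd dgen (fun x => if x == j then bar (I j) else I x) = - omega dd dgen I.
Proof.
set J := fun x => if x == j then bar (I j) else I x.
have DsetJ : forall P : {set 'I_n}, #|P| = 2 -> j \notin P -> Dset dd J P = Dset dd I P.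
  move=> P cP jP; have [k [l [kl EP]]] := set2_rep cP; subst P.
  move: jP; rewrite !inE negb_or => /andP[jk jl].
  by rewrite !Dset_set2 // /Dpair /J eq_sym (negbTE jk) eq_sym (negbTE jl).
rewrite /omega -sumrN; apply: eq_bigr => S HS.
case: (boolP (j \in cover S)) => jc.
- set P0 := pblock S j.
  have P0S : P0 \in S := pblock_mem jc.
  have jP0 : j \in P0 by rewrite mem_pblock.
  have DSJ : DS dd J S = - DS dd I S.
    have Hr : forall (L : 'I_n -> 'I_5 * 'I_5),
        DS dd L S = Dset dd L P0 * \prod_(P <- fs (mem (S :\ P0))) Dset dd L P.
      move=> L; rewrite /DS (prod_set_seq (r := P0 :: fs (mem (S :\ P0)))).
      - by rewrite big_cons.
      - by move=> a b; apply: comm_Dset.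
      - by rewrite /= mem_fs !inE eqxx /= fs_uniq.
      - by move=> Q; rewrite inE mem_fs !inE; case: (Q =P P0) => // ->; rewrite P0S.
    rewrite !Hr.
    have -> : \prod_(P <- fs (mem (S :\ P0))) Dset dd J P =
              \prod_(P <- fs (mem (S :\ P0))) Dset dd I P.
      apply: eq_big_seq => P; rewrite mem_fs !inE => /andP[PP0 PS].
      apply: DsetJ; first exact: sif_card HS PS.
      apply/negP => jP; move/negP: PP0; apply.
      by apply/eqP; apply: (sif_uniq HS PS P0S jP jP0).
    have [k [l [kl EP]]] := set2_rep (sif_card HS P0S).
    have : exists l', (j != l') /\ P0 = [set j; l'].
      move: jP0; rewrite EP !inE => /orP[]/eqP ->; first by exists l.
      by exists k; rewrite eq_sym kl setUC.
    move=> [l' [jl' ->]].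
    rewrite !Dset_set2 // /Dpair /J eqxx eq_sym (negbTE jl') /= eps_swap1 tt_swap1.
    by rewrite mulrNz mulrN mulNr scalerN mulNr.
  have dCJ : dC dgen J S = dC dgen I S.
    apply: eq_bigr => i ic; rewrite /J; case: eqP => // E; subst i.
    by rewrite jc in ic.
  by rewrite DSJ dCJ mulrN mulNr.
- have DSJ : DS dd J S = DS dd I S.
    apply: eq_bigr => P PS; apply: DsetJ; first exact: sif_card HS PS.
    by apply: contra jc => jP; apply: in_cover PS jP.
  have dCJ : dC dgen J S = - dC dgen I S.
    rewrite /dC (eq_bigr (fun i => (-1) ^+ (i == j) * dgen (I i).1 (I i).2)) => [|i _].
      rewrite prod_sign.
      rewrite (bigD1 j) //= big1 => [|i /andP[_ ij]]; last by rewrite (negbTE ij).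
      by rewrite eqxx expr1 mulN1r.
    rewrite /J; case: eqP => [->|_]; last by rewrite expr0 mul1r.
    by rewrite expr1 mulN1r /= hskew.
  by rewrite DSJ dCJ mulrN.
Qed.

End Bar.

End Part6.
Import Part6.

Unset Implicit Arguments.
Local Open Scope ring_scope.

Theorem corollary5p7 (K : fieldType) (hK : [pchar K] =i pred0)
    (A : algType K) (dd : 'I_5 -> A) (dgen : 'I_5 -> 'I_5 -> A)
    (hskew : forall i j, dgen i j = - dgen j i)
    (hdd : forall i j, dd i * dd j = dd j * dd i)
    (hcent : forall i j k, dd i * dgen j k = dgen j k * dd i)
    (hbr : forall i j k l,
       dgen i j * dgen k l + dgen k l * dgen i j = (eps i j k l)%:~R * dd (tt i j k l))
    (n : nat) (I : 'I_n -> 'I_5 * 'I_5) :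
  (exists j k : 'I_n, (j < k)%N /\ I j = I k) \/
  (exists j k : 'I_n, (j <= k)%N /\ I j = bar (I k)) ->
  omega dd dgen I = 0.
Proof.
have two0 : (2%:R : K) != 0 by rewrite ((pcharf0P K).1 hK 2).
have zero_of : forall x : A, x = - x -> x = 0.
  move=> x hx.
  have h2 : (2%:R : K) *: x = 0 by rewrite scaler_nat mulr2n {1}hx addNr.
  by rewrite -[x]scale1r -(mulVf two0) -scalerA h2 scaler0.
have swap_eq : forall (J : 'I_n -> 'I_5 * 'I_5) (p p' : 'I_n),
    nat_of_ord p' = (nat_of_ord p).+1 ->
    omega dd dgen J = - omega dd dgen (fun x => J (sw p p' x)).
  move=> J p p' hp.
  by rewrite (omega_swap hdd hcent hp J hK hbr) opprK.
have adj : forall m (J : 'I_n -> 'I_5 * 'I_5) (j k : 'I_n),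
    nat_of_ord k = (nat_of_ord j + m.+1)%N -> J j = J k -> omega dd dgen J = 0.
  elim => [|m IH] J j k hk Jjk.
  - apply: zero_of.
    have hp : nat_of_ord k = (nat_of_ord j).+1 by rewrite hk addn1.
    rewrite {1}(swap_eq J j k hp); congr (- omega dd dgen _).
    apply: functional_extensionality => x.
    rewrite /sw; case: tpermP => [->|->|] //.
  - have hk' : ((nat_of_ord k).-1 < n)%N by have := ltn_ord k; lia.
    set k' := Ordinal hk'.
    have hp : nat_of_ord k = (nat_of_ord k').+1 by rewrite /= hk; lia.
    rewrite (swap_eq J k' k hp).
    have -> : omega dd dgen (fun x => J (sw k' k x)) = 0; last by rewrite oppr0.
    apply: (IH _ j k'); first by rewrite /= hk; lia.
    have jk' : j != k' by apply/negP => /eqP E; move: hk; rewrite E /=; lia.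
    have jk : j != k by apply/negP => /eqP E; move: hk; rewrite E /=; lia.
    by rewrite /sw tpermL tpermD // eq_sym.
case => [[j [k [jk Ijk]]]|[j [k [jk Ijk]]]].
  by apply: (adj (k - j.+1)%N I j k) => //; lia.
set J := fun x => if x == j then bar (I j) else I x.
have HJ : omega dd dgen J = - omega dd dgen I by apply: omega_bar.
case: (eqVneq j k) => [E|jk'].
  subst k.
  have EJ : J = I.
    apply: functional_extensionality => x; rewrite /J.
    by case: eqP => [->|//]; rewrite -Ijk.
  by apply: zero_of; rewrite -{2}EJ HJ opprK.
have jk2 : (j < k)%N by rewrite ltn_neqAle jk' jk.
have : omega dd dgen J = 0.
  apply: (adj (k - j.+1)%N J j k); first by lia.
  rewrite /J eqxx eq_sym (negbTE jk') Ijk.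
  by case: (I k).
by rewrite HJ => /eqP; rewrite oppr_eq0 => /eqP.
Qed.
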